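(* Let $R$ be a unital ring with involution and let $a,b\in R$ both be core invertible. Then $a\overset{\circledast}{\leq} b$ if and only if $a^{\circledast}b=b^{\circledast}a$, $ba^{\circledast}=ab^{\circledast}$ and $ab^{\circledast}a=a$.
   Context: $R$ is a ring with identity and an involution $x\mapsto x^{*}$. An element $a\in R$ is core invertible if there exists $x\in R$ with $axa=a$, $xR=aR$ and $Rx=Ra^{*}$; such $x$ is unique, called the core inverse of $a$ and denoted $a^{\circledast}$. For $a$ core invertible and $b\in R$, $a\overset{\circledast}{\leq} b$ means $a^{\circledast}a=a^{\circledast}b$ and $aa^{\circledast}=ba^{\circledast}$. *)

(* Defs.v *)
From HB Require Import structures.
From mathcomp Require Import all_boot all_algebra.
Set Implicit Arguments. Unset Strict Implicit. Unset Printing Implicit Defensive.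
Import GRing.Theory.
Local Open Scope ring_scope.

Definition ring_involution (R : pzRingType) (star : R -> R) : Prop :=
  (forall x y : R, star (x + y) = star x + star y) /\
  (forall x y : R, star (x * y) = star y * star x) /\
  (forall x : R, star (star x) = x).

Definition same_right_ideal (R : pzRingType) (x a : R) : Prop :=
  (exists r : R, x = a * r) /\ (exists s : R, a = x * s).

Definition same_left_ideal (R : pzRingType) (x y : R) : Prop :=
  (exists r : R, x = r * y) /\ (exists s : R, y = s * x).

Definition is_core_inverse (R : pzRingType) (star : R -> R) (a x : R) : Prop :=
  a * x * a = a /\ same_right_ideal x a /\ same_left_ideal x (star a).

(* a <=core b, with x the core inverse of a. *)
Definition core_le (R : pzRingType) (a x b : R) : Prop :=
  x * a = x * b /\ a * x = b * x.

(* Main.v *)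
Require Import Defs.
From mathcomp Require Import all_boot all_algebra.
Local Open Scope ring_scope.
Import GRing.Theory.

Lemma core_props (R : pzRingType) (star : R -> R)
    (Hstar : ring_involution star) (a x : R) :
  is_core_inverse star a x ->
  [/\ a * x * a = a, star (a * x) = a * x, x * a * x = x,
      x * a * a = a & a * x * x = x].
Proof.
rewrite /is_core_inverse /same_right_ideal /same_left_ideal.
move=> [axa [[[r xr] [s as_]] [[r' xr'] [s' as']]]].
have [_ [sM sK]] := Hstar.
have h1 : x = x * star (a * x).
  by rewrite {1}xr' -{1}axa !sM !mulrA -xr'.
have herm : star (a * x) = a * x.
  have e : a * x = a * x * star (a * x) by rewrite -mulrA -h1.
  have h : star (a * x * star (a * x)) = a * x * star (a * x) by rewrite sM sK.
  by rewrite -e in h.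
have xax : x * a * x = x by rewrite -mulrA -herm -h1.
have xaa : x * a * a = a.
  by rewrite {2 3}as_ !mulrA xax.
have axx : a * x * x = x.
  by rewrite {2 3}xr !mulrA axa.
by split.
Qed.

Theorem proposition2p8 (R : pzRingType) (star : R -> R)
    (Hstar : ring_involution star) (a b ac bc : R)
    (Ha : is_core_inverse star a ac) (Hb : is_core_inverse star b bc) :
  core_le a ac b <->
  (ac * b = bc * a /\ b * ac = a * bc /\ a * bc * a = a).
Proof.
move: ac bc Ha Hb => x y Ha Hb.
have [_ [sM sK]] := Hstar.
have [axa hax xax xaa axx] := @core_props _ _ Hstar _ _ Ha.
have [byb hby yby ybb byy] := @core_props _ _ Hstar _ _ Hb.
split.
- move=> [e1 e2].
  have abxa : a = b * x * a by rewrite -e2.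
  have ybx : y * b * x = x.
    transitivity (y * b * (b * x * x)); first by rewrite -e2 axx.
    by rewrite !mulrA ybb -e2 axx.
  have eq1 : x * b = y * a.
    by rewrite -e1 {2}abxa !mulrA ybx.
  have axb : a = a * x * b by rewrite -mulrA -e1 mulrA axa.
  have e3 : a * x = b * y * (a * x).
    by rewrite e2 mulrA byb.
  have e4 : a * x = a * x * (b * y).
    by rewrite -hax {1}e3 sM hax hby.
  have eq2 : b * x = a * y.
    by rewrite -e2 e4 {2}axb !mulrA.
  split => //; split => //.
  by rewrite -eq2 -e2 axa.
- move=> [e1 [e2 e3]].
  split.
  + transitivity (x * (a * y) * a); first by rewrite -mulrA e3.
    rewrite -e2 mulrA {1}e1 -!mulrA [a * (x * a)]mulrA axa.
    by rewrite e1.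
  + transitivity (a * y * a * x); first by rewrite e3.
    by rewrite -e2 -!mulrA [x * (a * x)]mulrA xax.
Qed.
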